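(* Let $X,Y$ be real Hilbert spaces, let $K\subset X$ be a nonempty closed convex cone, and let $j:Y\times K\to\mathbb{R}$ be such that for every $\eta\in Y$ the function $j(\eta,\cdot):K\to\mathbb{R}$ is convex, positively homogeneous and Lipschitz continuous. Let $I$ be either $[0,T]$ ($T>0$) or $[0,+\infty)$, let $f:I\to X$, $\eta\in Y$, $u,z\in X$ and $t\in I$. Then $$u\in K\ \text{ and }\ j(\eta,v)-j(\eta,u)\ge (f(t)-z,v-u)_X\ \ \forall v\in K \quad\Longleftrightarrow\quad -u\in \mathrm{N}_{C(\eta,t)}(z).$$
   Context: Define $J:Y\times X\to(-\infty,+\infty]$ by $J(\eta,v)=j(\eta,v)$ if $v\in K$ and $J(\eta,v)=+\infty$ otherwise; $C(\eta)=\{\xi\in X: J(\eta,v)\ge(\xi,v)_X\ \forall v\in X\}$ and $C(\eta,t)=f(t)-C(\eta)$. For a nonempty closed convex set $D\subset X$, $\mathrm{N}_D(x)=\{\xi\in X:(\xi,w-x)_X\le 0\ \forall w\in D\}$ if $x\in D$, and $\mathrm{N}_D(x)=\emptyset$ if $x\notin D$. *)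

(* Defs.v *)
From HB Require Import structures.
From mathcomp Require Import all_boot all_order all_algebra.
From mathcomp Require Import all_classical all_reals all_analysis.
Set Implicit Arguments. Unset Strict Implicit. Unset Printing Implicit Defensive.
Import Order.TTheory GRing.Theory Num.Theory.
Import numFieldNormedType.Exports.
Local Open Scope classical_set_scope.
Local Open Scope ring_scope.

(* A real Hilbert space: a complete normed space over R whose norm is induced
   by the inner product [ip] (symmetric, linear in the first argument). *)
Definition is_inner_product (R : realType) (X : completeNormedModType R)
  (ip : X -> X -> R) : Prop :=
  [/\ (forall x y, ip x y = ip y x),
      (forall (a : R) (x y z : X), ip (a *: x + y) z = a * ip x z + ip y z) &
      (forall x, ip x x = `|x| ^+ 2)].

Definition h_convex_set (R : realType) (X : completeNormedModType R) (D : set X) : Prop :=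
  forall x y (l : R), D x -> D y -> 0 <= l <= 1 -> D (l *: x + (1 - l) *: y).

Definition h_is_cone (R : realType) (X : completeNormedModType R) (K : set X) : Prop :=
  forall x (l : R), K x -> 0 <= l -> K (l *: x).

Definition h_convex_fun_on (R : realType) (X : completeNormedModType R)
  (D : set X) (g : X -> R) : Prop :=
  forall x y (l : R), D x -> D y -> 0 <= l <= 1 ->
    g (l *: x + (1 - l) *: y) <= l * g x + (1 - l) * g y.

Definition h_pos_homogeneous_on (R : realType) (X : completeNormedModType R)
  (D : set X) (g : X -> R) : Prop :=
  forall x (l : R), D x -> 0 < l -> g (l *: x) = l * g x.

Definition h_lipschitz_on (R : realType) (X : completeNormedModType R)
  (D : set X) (g : X -> R) : Prop :=
  exists L : R, forall x y, D x -> D y -> `|g x - g y| <= L * `|x - y|.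

Definition Jext (R : realType) (X Y : completeNormedModType R) (K : set X)
  (j : Y -> X -> R) (eta : Y) (v : X) : \bar R :=
  if `[< K v >] then (j eta v)%:E else +oo%E.

Definition Cset (R : realType) (X Y : completeNormedModType R) (ip : X -> X -> R)
  (K : set X) (j : Y -> X -> R) (eta : Y) : set X :=
  [set xi | forall v : X, ((ip xi v)%:E <= Jext K j eta v)%E].

Definition Cset_t (R : realType) (X Y : completeNormedModType R) (ip : X -> X -> R)
  (K : set X) (j : Y -> X -> R) (f : R -> X) (eta : Y) (t : R) : set X :=
  [set f t - xi | xi in Cset ip K j eta].

Definition h_normal_cone (R : realType) (X : completeNormedModType R)
  (ip : X -> X -> R) (D : set X) (x : X) : set X :=
  if `[< D x >] then [set xi | forall w, D w -> ip xi (w - x) <= 0] else set0.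

(* Main.v *)
Require Import Defs.
From HB Require Import structures.
From mathcomp Require Import all_boot all_order all_algebra.
From mathcomp Require Import all_classical all_reals all_analysis.
From mathcomp Require Import lra.
Import Order.TTheory GRing.Theory Num.Theory.
Import numFieldNormedType.Exports.
Local Open Scope classical_set_scope.
Local Open Scope ring_scope.
Set Implicit Arguments.

Section IP.
Context (R : realType) (X : completeNormedModType R) (ip : X -> X -> R)
  (hX : is_inner_product ip).

Lemma ipS x y : ip x y = ip y x.
Proof. by case: hX. Qed.

Lemma ipDl x y z : ip (x + y) z = ip x z + ip y z.
Proof. case: hX => _ h _. by have := h 1 x y z; rewrite scale1r mul1r. Qed.

Lemma ip0l z : ip 0 z = 0.
Proof. have := ipDl 0 0 z; rewrite addr0 => h. lra. Qed.

Lemma ipZl a x z : ip (a *: x) z = a * ip x z.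
Proof. case: hX => _ h _. by have := h a x 0 z; rewrite addr0 ip0l addr0. Qed.

Lemma ipNl x z : ip (- x) z = - ip x z.
Proof. by rewrite -scaleN1r ipZl mulN1r. Qed.

Lemma ipBl x y z : ip (x - y) z = ip x z - ip y z.
Proof. by rewrite ipDl ipNl. Qed.

Lemma ipDr x y z : ip z (x + y) = ip z x + ip z y.
Proof. by rewrite !(ipS z) ipDl. Qed.
Lemma ipZr a x z : ip z (a *: x) = a * ip z x.
Proof. by rewrite !(ipS z) ipZl. Qed.
Lemma ipNr x z : ip z (- x) = - ip z x.
Proof. by rewrite !(ipS z) ipNl. Qed.
Lemma ipBr x y z : ip z (x - y) = ip z x - ip z y.
Proof. by rewrite !(ipS z) ipBl. Qed.
Lemma ip0r z : ip z 0 = 0.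
Proof. by rewrite ipS ip0l. Qed.

Lemma ipn x : ip x x = `|x| ^+ 2.
Proof. by case: hX. Qed.

Lemma ip_ge0 x : 0 <= ip x x.
Proof. by rewrite ipn sqr_ge0. Qed.

Lemma ip_le0 x : ip x x <= 0 -> x = 0.
Proof.
rewrite ipn => h. apply/normr0_eq0.
have h0 : 0 <= `|x| by [].
nra.
Qed.

End IP.
Ltac ipsimp hX := rewrite ?(ipDl hX, ipBl hX, ipZl hX, ipNl hX, ipDr hX, ipBr hX, ipZr hX, ipNr hX, ip0l hX, ip0r hX).

Lemma exists_min (R : realType) (X : completeNormedModType R) (ip : X -> X -> R)
  (hX : is_inner_product ip) (K : set X) (hK0 : K 0) (hKcl : closed K)
  (hKcv : h_convex_set K) (g : X -> R) (hg : h_convex_fun_on K g)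
  (hg0 : g 0 = 0) (L : R)
  (hL : forall x y, K x -> K y -> `|g x - g y| <= L * `|x - y|) (w : X) :
  exists2 p, K p & forall v, K v -> ip (w - p) (v - p) <= g v - g p.
Proof.
pose F v := g v + ip (v - w) (v - w) / 2.
pose L' := `|L|.
have L'0 : 0 <= L' by apply: normr_ge0.
have hL' x y : K x -> K y -> `|g x - g y| <= L' * `|x - y|.
  move=> Kx Ky; apply: (le_trans (hL x y Kx Ky)).
  by apply: ler_wpM2r => //; apply: ler_norm.
have Flb v : K v -> - L' * `|w| - L' ^+ 2 / 2 <= F v.
  move=> Kv; have := hL' v 0 Kv hK0; rewrite hg0 !subr0 => h1.
  have h2 := ler_norm (- g v); rewrite normrN in h2.
  have h3 : `|v| <= `|v - w| + `|w| by rewrite -{1}(subrK w v) ler_normD.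
  rewrite /F (ipn hX).
  have h4 : 0 <= `|v - w| by apply: normr_ge0.
  have h5 : 0 <= `|w| by apply: normr_ge0.
  have h6 := mulr_ge0 L'0 ((ltac:(by rewrite subr_ge0) : 0 <= `|v - w| + `|w| - `|v|)).
  have h7 := sqr_ge0 (`|v - w| - L').
  nra.
pose S := [set F v | v in K].
have hS : has_inf S.
  rewrite /has_inf; split; first by exists (F 0), 0.
  by exists (- L' * `|w| - L' ^+ 2 / 2) => _ [v Kv <-]; apply: Flb.
set m := inf S.
have mle v : K v -> m <= F v by move=> Kv; apply: (ge_inf hS.2); exists v.
have adh n : exists v, K v /\ F v < m + n.+1%:R^-1.
  have e0 : 0 < n.+1%:R^-1 :> R by rewrite invr_gt0 ltr0Sn.
  have [_ [v Kv <-] h] := inf_adherent e0 hS. by exists v.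
have [a ha] := choice adh.
have mid x y : K x -> K y -> ip (x - y) (x - y) <= 4 * (F x + F y - 2 * m).
  move=> Kx Ky.
  have h12 : 0 <= (1/2 : R) <= 1 by lra.
  have Kc := hKcv x y (1/2) Kx Ky h12.
  have gc := hg x y (1/2) Kx Ky h12.
  have := mle _ Kc; rewrite /F.
  ipsimp hX. rewrite (ipS hX y x) (ipS hX w x) (ipS hX w y).
  lra.
have cvga : cvg (a @ \oo).
  apply: cauchy_cvg; apply: cauchy_exP => e e0.
  pose N := Num.trunc (8 / e ^+ 2).
  have hN : 8 / e ^+ 2 < N.+1%:R by apply: truncnS_gt.
  have hN' : 8 / N.+1%:R < e ^+ 2.
    rewrite ltr_pdivrMr // mulrC -ltr_pdivrMr //; exact: exprn_gt0.
  exists (a N); rewrite /fmapE -ball_normE /ball_.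
  exists N => // k /= hk.
  have h1 := mid _ _ (ha N).1 (ha k).1.
  have h2 := (ha N).2. have h3 := (ha k).2.
  have h4 : k.+1%:R^-1 <= N.+1%:R^-1 :> R.
    by rewrite lef_pV2 ?posrE ?ltr0Sn // ler_nat.
  have h5 : 8 / N.+1%:R = 8 * N.+1%:R^-1 :> R by [].
  rewrite (ipn hX) in h1.
  have h6 : 0 <= `|a N - a k| by apply: normr_ge0.
  rewrite h5 in hN'.
  move: h1 h2 h3 h4 hN' h6; clearbody m.
  move: (F (a N)) (F (a k)) (N.+1%:R^-1 : R) (k.+1%:R^-1 : R) (`|a N - a k|) => A B iN iK d.
  move=> h1 h2 h3 h4 hN' h6.
  have h7 : d ^+ 2 < e ^+ 2 by lra.
  nra.
set p := lim (a @ \oo).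
have Kp : K p.
  apply: (closed_cvg _ hKcl _ _ cvga).
  by exists 0%N => // n _; exact: (ha n).1.
have Fp : F p <= m.
  apply/ler_addgt0Pr => e e0.
  pose A := `|p - w|.
  have A0 : 0 <= A by apply: normr_ge0.
  pose M := L' + A + 1.
  have M0 : 0 < M by rewrite /M; lra.
  pose d := e / (2 * M + e).
  have d0 : 0 < d by rewrite /d divr_gt0 //; lra.
  have hd : d * (2 * M + e) = e by rewrite /d mulfVK //; apply: lt0r_neq0; lra.
  have [N _ hN] := (cvgrPdist_lt _ _).1 cvga d d0.
  pose n := maxn N (Num.trunc (2 / e)).
  have hn : (N <= n)%N by apply: leq_maxl.
  have /= hpn := hN n hn.
  have hn2 : n.+1%:R^-1 <= e / 2.
    have h1 : 2 / e < (Num.trunc (2 / e)).+1%:R by apply: truncnS_gt.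
    have h2 : (Num.trunc (2 / e)).+1%:R <= n.+1%:R :> R by rewrite ler_nat ltnS leq_maxr.
    have h3 : 2 < e * n.+1%:R.
      by rewrite mulrC -ltr_pdivrMr //; apply: (lt_le_trans h1 h2).
    have h4 : n.+1%:R * n.+1%:R^-1 = 1 :> R by rewrite mulfV.
    have h5 : 0 < n.+1%:R^-1 :> R by rewrite invr_gt0 ltr0Sn.
    move: h3 h4 h5; move: (n.+1%:R : R) (n.+1%:R^-1 : R) => x y h3 h4 h5.
    nra.
  have Kq := (ha n).1. have Fq := (ha n).2.
  have hg1 := hL' p (a n) Kp Kq.
  have hg2 := ler_norm (g p - g (a n)).
  have hA : `|p - w| <= `|p - a n| + `|a n - w|.
    by have := ler_normD (p - a n) (a n - w); rewrite addrA subrK.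
  have hB : `|a n - w| <= `|p - a n| + `|p - w|.
    by have := ler_normD (a n - p) (p - w); rewrite addrA subrK (distrC (a n) p).
  have B0 : 0 <= `|a n - w| by apply: normr_ge0.
  have D0 : 0 <= `|p - a n| by apply: normr_ge0.
  move: Fq; rewrite /F !(ipn hX) -/A => Fq.
  rewrite -/A in hA hB. clearbody A.
  move: hg1 hg2 hA hB B0 D0 Fq hpn hn2.
  move: (g p) (g (a n)) (`|a n - w|) (`|p - a n|) (n.+1%:R^-1 : R) => gp gq B D i.
  move=> hg1 hg2 hA hB B0 D0 Fq hpn hn2.
  have h1 : A ^+ 2 - B ^+ 2 <= D * (2 * A + D).
    have k1 : 0 <= D - A + B by lra.
    have k2 : 0 <= A + B by lra.
    have k3 : 0 <= D + A - B by lra.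
    have := mulr_ge0 k1 k2; have := mulr_ge0 D0 k3. nra.
  have h2 : d < 1 by nra.
  have h3 : L' * D <= L' * d by nra.
  have h4 : D * (L' + A + D / 2) <= d * M by rewrite /M; nra.
  have h5 : d * M <= e / 2 by nra.
  clearbody m. nra.
exists p => // v Kv.
rewrite leNgt; apply/negP => hlt.
pose A0 := g v - g p + ip (v - p) (p - w).
pose B := ip (v - p) (v - p).
have B0 : 0 <= B by apply: ip_ge0.
have hA0 : A0 < 0.
  move: hlt; rewrite /A0; ipsimp hX; rewrite (ipS hX p v) (ipS hX w v) (ipS hX w p); lra.
pose s := - A0 / (B - A0).
have BA0 : 0 < B - A0 by lra.
have hs : s * (B - A0) = - A0 by rewrite /s mulfVK //; apply: lt0r_neq0.
have s0 : 0 < s by rewrite /s divr_gt0 //; lra.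
have s1 : s <= 1 by nra.
have h01 : 0 <= s <= 1 by rewrite (ltW s0) s1.
have Kq := hKcv v p s Kv Kp h01.
have gq := hg v p s Kv Kp h01.
have mq := mle _ Kq.
have key : 0 <= s * A0 + s ^+ 2 / 2 * B.
  move: mq Fp gq; rewrite /F /A0 /B; ipsimp hX.
  rewrite (ipS hX p v) (ipS hX w v) (ipS hX w p); clearbody m.
  rewrite expr2. nra.
clearbody A0 B s.
nra.
Qed.

Lemma vi_C (R : realType) (X : completeNormedModType R) (ip : X -> X -> R)
  (hX : is_inner_product ip) (K : set X) (hK0 : K 0)
  (hKcone : h_is_cone K) (g : X -> R) (hgh : h_pos_homogeneous_on K g)
  (hg0 : g 0 = 0) (p xi : X) (Kp : K p)
  (hvi : forall v, K v -> ip xi (v - p) <= g v - g p) :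
  g p = ip xi p /\ forall v, K v -> ip xi v <= g v.
Proof.
have h1 := hvi 0 hK0; rewrite hg0 sub0r (ipNr hX) in h1.
have K2 : K (2 *: p) by apply: hKcone => //; lra.
have h2 := hvi _ K2; rewrite (hgh p 2 Kp) ?ltr0Sn // (ipBr hX) (ipZr hX) in h2.
have e : g p = ip xi p by lra.
split => // v Kv; have := hvi v Kv; rewrite (ipBr hX); lra.
Qed.

Lemma Cset_iff (R : realType) (X Y : completeNormedModType R) (ip : X -> X -> R)
  (K : set X) (j : Y -> X -> R) (eta : Y) xi :
  Cset ip K j eta xi <-> forall v, K v -> ip xi v <= j eta v.
Proof.
rewrite /Cset /Jext /=; split => h v.
  by move=> Kv; have := h v; rewrite asboolT // lee_fin.
by case: asboolP => Kv; [rewrite lee_fin; exact: h | exact: leey].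
Qed.

Theorem lemma3p1 (R : realType) (X Y : completeNormedModType R)
  (ipX : X -> X -> R) (ipY : Y -> Y -> R)
  (hX : is_inner_product ipX) (hY : is_inner_product ipY)
  (K : set X) (hKne : K !=set0) (hKcl : closed K) (hKcv : h_convex_set K)
  (hKcone : h_is_cone K)
  (j : Y -> X -> R)
  (hjconv : forall eta, h_convex_fun_on K (j eta))
  (hjhom : forall eta, h_pos_homogeneous_on K (j eta))
  (hjlip : forall eta, h_lipschitz_on K (j eta))
  (I : set R) (hI : (exists T : R, 0 < T /\ I = `[0, T]%classic) \/ I = `[0, +oo[%classic)
  (f : R -> X) (eta : Y) (u z : X) (t : R) (ht : I t) :
  (K u /\ forall v, K v -> j eta v - j eta u >= ipX (f t - z) (v - u)) <->
  h_normal_cone ipX (Cset_t ipX K j f eta t) z (- u).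
Proof.
have hK0 : K 0.
  by case: hKne => x0 Kx0; have := hKcone x0 0 Kx0 (lexx 0); rewrite scale0r.
have g0 : j eta 0 = 0.
  have := hjhom eta 0 2 hK0 (ltr0Sn R 1); rewrite scaler0 => h; lra.
case: (hjlip eta) => L hL.
split.
  move=> [Ku hvi].
  have [ju gC] := vi_C hX hK0 hKcone (hjhom eta) g0 _ _ Ku hvi.
  have zin : Cset_t ipX K j f eta t z.
    exists (f t - z); first by apply/Cset_iff.
    by rewrite opprB addrC subrK.
  rewrite /h_normal_cone asboolT // => _ [xi /Cset_iff Cxi <-].
  have := Cxi u Ku; rewrite ju.
  ipsimp hX; rewrite !(ipS hX u); lra.
rewrite /h_normal_cone; case: asboolP => [zin | _] // hN.
case: zin => g Cg eqz; have gC := (Cset_iff _ _ _ _ _ _ _).1 Cg.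
have hNN xi : Cset ipX K j eta xi -> ipX (- u) (f t - xi - z) <= 0.
  by move=> Cxi; apply: hN; exists xi.
have [p Kp hvi] := exists_min hX hK0 hKcl hKcv (hjconv eta) g0 L hL (g + u).
have [jp xiC] := vi_C hX hK0 hKcone (hjhom eta) g0 _ _ Kp hvi.
have h1 := hNN (g + u - p) ((Cset_iff _ _ _ _ _ _ _).2 xiC).
have h2 := gC p Kp.
rewrite jp -eqz in h1 h2.
have up : u = p.
  apply/eqP; rewrite -subr_eq0; apply/eqP; apply: (ip_le0 hX).
  move: h1 h2; ipsimp hX; rewrite (ipS hX p u); lra.
subst p.
have -> : f t - z = g by rewrite -eqz opprB addrC subrK.
split => // v Kv; have := hvi v Kv; rewrite addrK; apply.
Qed.
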